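(* Let $(\Omega,\mathcal{F},\mathbb{P})$ be a nonatomic probability space, let $u:\mathbb{R}\to\mathbb{R}\cup\{-\infty\}$ be a utility function bounded from above, let $\alpha\in\mathbb{R}$ be such that $u(x)\ge\alpha$ for some $x\in\mathbb{R}$, and set $\mathcal{A}_u^\infty=\{X\in L^\infty: \mathbb{E}[u(X)]\ge\alpha\}$. Let $S=(S_0,S_T)$ be a traded asset with $S_T\in L^\infty$. (i) Assume $u$ never attains the value $-\infty$ and $u(x)>\alpha$ for some $x\in\mathbb{R}$. Then $\rho_{\mathcal{A}_u^\infty,S}$ is finite-valued (hence continuous) on $L^\infty$ if and only if $\mathbb{P}(S_T=0)=0$. (ii) Assume $u$ attains the value $-\infty$ or $u(x)\le\alpha$ for all $x\in\mathbb{R}$. Then $\rho_{\mathcal{A}_u^\infty,S}$ is finite-valued (hence continuous) on $L^\infty$ if and only if $\mathbb{P}(S_T\ge\varepsilon)=1$ for some $\varepsilon>0$.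
   Context: A utility function is a nonconstant, increasing, concave function $u:\mathbb{R}\to\mathbb{R}\cup\{-\infty\}$ (it is then unbounded from below). A traded asset is $S=(S_0,S_T)$ with $S_0>0$ and $S_T\ge0$ a.s., $S_T\neq0$. For $\mathcal{B}\subset L^\infty$, $\rho_{\mathcal{B},S}(X)=\inf\{m\in\mathbb{R}: X+\frac{m}{S_0}S_T\in\mathcal{B}\}$, $X\in L^\infty$. *)

(* Defs.v *)
From HB Require Import structures.
From mathcomp Require Import all_boot all_order all_algebra.
From mathcomp Require Import all_classical all_reals all_analysis.
Set Implicit Arguments. Unset Strict Implicit. Unset Printing Implicit Defensive.
Import Order.TTheory GRing.Theory Num.Theory.
Local Open Scope classical_set_scope.
Local Open Scope ring_scope.

Section Defs.
Context (R : realType) (d : measure_display) (T : measurableType d).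
Variable P : probability T R.

Definition nonatomic : Prop :=
  forall A : set T, measurable A -> (0 < P A)%E ->
    exists B : set T, [/\ measurable B, B `<=` A, (0 < P B)%E & (P B < P A)%E].

Definition Linf (X : T -> R) : Prop :=
  measurable_fun setT X /\ exists M : R, {ae P, forall t, `|X t| <= M}.

Definition utility (u : R -> \bar R) : Prop :=
  [/\ forall x, u x != +oo%E,
      exists x y, u x != u y,
      forall x y, x <= y -> (u x <= u y)%E
    & forall x y (l : R), 0 < l -> l < 1 ->
        (l%:E * u x + (1 - l)%:E * u y <= u (l * x + (1 - l) * y)%R)%E].

Definition acc_set (u : R -> \bar R) (alpha : R) : set (T -> R) :=
  [set X | Linf X /\ (alpha%:E <= \int[P]_t u (X t))%E].

Definition traded_asset (S0 : R) (ST : T -> R) : Prop :=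
  [/\ 0 < S0, measurable_fun setT ST, {ae P, forall t, 0 <= ST t}
    & ~ {ae P, forall t, ST t = 0}].

Definition rho (B : set (T -> R)) (S0 : R) (ST : T -> R) (X : T -> R) : \bar R :=
  ereal_inf [set m%:E | m in [set m : R | B (fun t => X t + m / S0 * ST t)]].

End Defs.

(* Main.v *)
Require Import Defs.
From HB Require Import structures.
From mathcomp Require Import all_boot all_order all_algebra.
From mathcomp Require Import all_classical all_reals all_analysis.
From mathcomp Require Import measurable_realfun ring lra.
Set Implicit Arguments. Unset Strict Implicit. Unset Printing Implicit Defensive.
Import Order.TTheory GRing.Theory Num.Theory.
Local Open Scope classical_set_scope.
Local Open Scope ring_scope.

Lemma conc_unb (R : realType) (v : R -> R) :
  (forall x y, x <= y -> v x <= v y) -> (exists x y, v x != v y) ->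
  (forall x y l, 0 < l -> l < 1 -> l * v x + (1 - l) * v y <= v (l * x + (1 - l) * y)) ->
  forall r, exists z, v z <= r.
Proof.
move=> vm [x1 [y1 hne]] vc r.
have [a [b [ab vab]]] : exists a b, a < b /\ v a < v b.
  case: (leP x1 y1) => h.
    exists x1, y1; split; last by rewrite lt_neqAle (vm _ _ h) andbT.
    by rewrite lt_neqAle h andbT; apply: contra hne => /eqP ->.
  exists y1, x1; split => //.
  by rewrite lt_neqAle (vm _ _ (ltW h)) andbT eq_sym.
set h := b - a; set c := v b - v a.
have h0 : 0 < h by rewrite subr_gt0.
have c0 : 0 < c by rewrite subr_gt0.
set D := h * (2 + `|v b - r| / c).
have D2 : 2 * h <= D.
  have q0 : 0 <= `|v b - r| / c by rewrite divr_ge0 // ltW.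
  rewrite /D; nra.
have D0 : 0 < D by lra.
set l := h / D.
have lD : l * D = h by rewrite /l mulfVK // gt_eqF.
have cD : c * D = 2 * c * h + h * `|v b - r|.
  rewrite /D; field; exact: lt0r_neq0.
have l0 : 0 < l by rewrite /l divr_gt0.
have l1 : l < 1 by rewrite /l ltr_pdivrMr //; lra.
exists (b - D).
have := vc (b - D) b l l0 l1.
have -> : l * (b - D) + (1 - l) * b = a.
  have : l * (b - D) + (1 - l) * b = b - l * D by ring.
  by rewrite lD /h => ->; ring.
move=> hc; rewrite leNgt; apply/negP => rz.
have nb : v b - r <= `|v b - r| by exact: ler_norm.
have hc' : c <= l * (v b - v (b - D)) by rewrite /c; lra.
have hc2 : l * (v b - v (b - D)) < l * (v b - r) by rewrite ltr_pM2l //; lra.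
have hc3 : c * D < l * (v b - r) * D by rewrite ltr_pM2r //; lra.
have : l * (v b - r) * D = h * (v b - r) by rewrite mulrAC lD.
move=> e; rewrite e cD in hc3.
nra.
Qed.

Section Helpers.
Context (R : realType) (d : measure_display) (T : measurableType d).
Context (P : probability T R).

Lemma mono_emeas (u : R -> \bar R) :
  (forall x y, x <= y -> (u x <= u y)%E) -> measurable_fun [set: R] u.
Proof.
move=> um; apply: (measurability _ (ErealGenCInfty.measurableE R)).
move=> /= _ [_ [r ->] <-]; apply: measurableI => //.
apply: is_interval_measurable => s t /=.
rewrite !in_itv /= !andbT => fs ft w /andP[sw wt].
by rewrite in_itv /= andbT (le_trans fs) // um.
Qed.

Lemma ae_le_int (f g : T -> \bar R) : measurable_fun setT f ->
  measurable_fun setT g -> {ae P, forall x, (f x <= g x)%E} ->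
  (\int[P]_x f x <= \int[P]_x g x)%E.
Proof.
move=> mf mg fg; rewrite integralE [leRHS]integralE leeB //.
- apply: (ae_ge0_le_integral measurableT).
  + by move=> x _; exact: funepos_ge0.
  + exact: measurable_funepos.
  + by move=> x _; exact: funepos_ge0.
  + exact: measurable_funepos.
  + apply: filterS fg => x fgx _.
    apply: (@funepos_le _ _ [set x] f g); last by rewrite inE.
    by move=> y; rewrite inE => ->.
- apply: (ae_ge0_le_integral measurableT).
  + by move=> x _; exact: funeneg_ge0.
  + exact: measurable_funeneg.
  + by move=> x _; exact: funeneg_ge0.
  + exact: measurable_funeneg.
  + apply: filterS fg => x fgx _.
    apply: (@funeneg_le _ _ [set x] f g); last by rewrite inE.
    by move=> y; rewrite inE => ->.
Qed.

Lemma Pfin (A : set T) : measurable A -> P A \is a fin_num.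
Proof.
move=> mA; rewrite ge0_fin_numE ?measure_ge0 //.
exact: (le_lt_trans (probability_le1 P mA) (ltry 1)).
Qed.

Lemma step_int (A : set T) (a b : R) : measurable A ->
  (\int[P]_t ((b + (a - b) * \1_A t)%R%:E) = (b + (a - b) * fine (P A))%:E)%E.
Proof.
move=> mA.
under eq_integral do rewrite EFinD EFinM.
rewrite integralD //.
- rewrite integral_cst //.
  rewrite [X in (b%:E * X)%E](_ : _ = 1%E); last exact: probability_setT.
  rewrite mule1 integralZl //.
  + rewrite integral_indic // setIT.
    transitivity (b%:E + (a-b)%:E * (fine (P A))%:E)%E; last first.
      by rewrite -EFinM -EFinD.
    congr (_ + _ * _)%E; exact: (esym (fineK (Pfin mA))).
  + exact: integrable_indic.
- exact: finite_measure_integrable_cst.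
- apply: integrableZl => //; exact: integrable_indic.
Qed.

Lemma step_meas (A : set T) (a b : R) : measurable A ->
  measurable_fun setT (fun t => ((b + (a - b) * \1_A t)%R%:E : \bar R)).
Proof.
move=> mA; apply/measurable_EFinP.
apply: measurable_funD; first exact: measurable_cst.
apply: measurable_funM; first exact: measurable_cst.
exact: measurable_indic.
Qed.

Lemma step_val (A : set T) (a b : R) t :
  (b + (a - b) * \1_A t = if t \in A then a else b)%R.
Proof.
rewrite indicE; case: (t \in A) => /=.
  by rewrite mulr1 addrC subrK.
by rewrite mulr0 addr0.
Qed.

Lemma int_le_step (f : T -> \bar R) (A : set T) (a b : R) :
  measurable A -> measurable_fun setT f ->
  {ae P, forall t, A t -> (f t <= a%:E)%E} -> {ae P, forall t, (f t <= b%:E)%E} ->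
  (\int[P]_t f t <= (b + (a - b) * fine (P A))%:E)%E.
Proof.
move=> mA mf hA hb; rewrite -step_int //; apply: ae_le_int => //.
  exact: step_meas.
apply: filterS2 hA hb => t h1 h2; rewrite step_val.
by case: ifPn => // /set_mem /h1.
Qed.

Lemma step_le_int (f : T -> \bar R) (A : set T) (a b : R) :
  measurable A -> measurable_fun setT f ->
  {ae P, forall t, A t -> (a%:E <= f t)%E} -> {ae P, forall t, (b%:E <= f t)%E} ->
  ((b + (a - b) * fine (P A))%:E <= \int[P]_t f t)%E.
Proof.
move=> mA mf hA hb; rewrite -step_int //; apply: ae_le_int => //.
  exact: step_meas.
apply: filterS2 hA hb => t h1 h2; rewrite step_val.
by case: ifPn => // /set_mem /h1.
Qed.
Lemma meas_ge (f : T -> R) (c : R) : measurable_fun setT f -> measurable [set t | c <= f t].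
Proof.
move=> mf; have := mf measurableT _ (measurable_itv `[c, +oo[); rewrite setTI.
congr measurable; apply/seteqP; split => t /=; by rewrite in_itv /= andbT.
Qed.
Lemma meas_eq (f : T -> R) (c : R) : measurable_fun setT f -> measurable [set t | f t = c].
Proof.
move=> mf; have := mf measurableT _ (measurable_set1 c); rewrite setTI.
by [].
Qed.
Lemma ae_of_null (A : set T) (Q : T -> Prop) : measurable A -> P A = 0%E ->
  (forall t, ~ A t -> Q t) -> {ae P, forall t, Q t}.
Proof.
move=> mA PA hQ; exists A; split => // t /= nQ; apply: contrapT => nA; exact: nQ (hQ t nA).
Qed.
Lemma null_of_ae (Q : T -> Prop) : {ae P, forall t, Q t} ->
  exists N, [/\ measurable N, P N = 0%E & forall t, ~ N t -> Q t].
Proof.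
move=> [N [mN PN sub]]; exists N; split => // t nN; apply: contrapT => nQ; exact: nN (sub t nQ).
Qed.
Lemma rho_fin (B : set (T -> R)) (S0 : R) (ST X : T -> R) :
  (exists m, B (fun t => X t + m / S0 * ST t)) ->
  (exists m0, forall m, B (fun t => X t + m / S0 * ST t) -> m0 <= m) ->
  rho B S0 ST X \is a fin_num.
Proof.
move=> [m Bm] [m0 H]; rewrite /rho fin_numElt; apply/andP; split.
  apply: (lt_le_trans (ltNyr m0)); apply/ereal_infP => _ [m' Bm' <-].
  by rewrite lee_fin; exact: H.
apply: (le_lt_trans _ (ltry m)); apply: ge_ereal_inf; exists m%:E => //.
by exists m.
Qed.

Lemma rho_infty (B : set (T -> R)) (S0 : R) (ST X : T -> R) :
  (forall m, ~ B (fun t => X t + m / S0 * ST t)) -> rho B S0 ST X = +oo%E.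
Proof.
move=> H; apply/eqP; rewrite eq_le leey /=.
by apply/ereal_infP => y [m Bm _]; case: (H m Bm).
Qed.

Lemma Linf_lin (X Y : T -> R) (c : R) : Linf P X -> Linf P Y ->
  Linf P (fun t => X t + c * Y t).
Proof.
move=> [mX [K hK]] [mY [K' hK']]; split.
  apply: measurable_funD => //; apply: measurable_funM => //; exact: measurable_cst.
exists (K + `|c| * K'); apply: filterS2 hK hK' => t h1 h2.
rewrite (le_trans (ler_normD _ _)) // lerD // normrM ler_wpM2l //.
Qed.

Lemma Linf_cst (c : R) : Linf P (fun=> c).
Proof. split; first exact: measurable_cst. by exists `|c|; exact: aeW. Qed.

Lemma Linf_ind (A : set T) (c : R) : measurable A -> Linf P (fun t => c * \1_A t).
Proof.
move=> mA; split.
  apply: measurable_funM; [exact: measurable_cst|exact: measurable_indic].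
exists `|c|; apply: aeW => t; rewrite normrM indicE.
by case: (t \in A); rewrite ?normr1 ?normr0 ?mulr1 ?mulr0.
Qed.

Lemma Linf_bnd (X : T -> R) : Linf P X ->
  exists K, 0 <= K /\ {ae P, forall t, - K <= X t /\ X t <= K}.
Proof.
move=> [_ [K hK]]; exists `|K|; split => //; apply: filterS hK => t h.
have h' : `|X t| <= `|K| by rewrite (le_trans h) // ler_norm.
by split; [rewrite lerNl; rewrite (le_trans _ h') // -normrN ler_norm | rewrite (le_trans _ h') // ler_norm].
Qed.
Lemma fineT : fine (P [set: T]) = 1.
Proof. by rewrite probability_setT. Qed.
End Helpers.

Section Main.
Context (R : realType) (d : measure_display) (T : measurableType d).
Context (P : probability T R) (u : R -> \bar R) (alpha S0 M : R) (ST : T -> R).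
Context (umono : forall x y, x <= y -> (u x <= u y)%E).
Context (uM : forall x, (u x <= M%:E)%E).
Context (S0pos : 0 < S0) (mST : measurable_fun setT ST).
Context (ST0 : {ae P, forall t, 0 <= ST t}) (LST : Linf P ST).

Let mU (X : T -> R) (m : R) : Linf P X ->
  measurable_fun setT (fun t => u (X t + m / S0 * ST t)).
Proof.
move=> LX; exact: (measurableT_comp (mono_emeas umono) (Linf_lin (m / S0) LX LST).1).
Qed.

Lemma i_fwd (unb : forall r, exists z, (u z <= r%:E)%E) :
  (forall X, Linf P X -> rho (acc_set P u alpha) S0 ST X \is a fin_num) ->
  P [set t | ST t = 0] = 0%E.
Proof.
move=> H.
have mA : measurable [set t | ST t = 0] := meas_eq 0 mST.
apply/eqP; rewrite eq_le measure_ge0 andbT leNgt; apply/negP => pos.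
have := Pfin P mA; have := probability_le1 P mA; move: pos.
set q := P _ => pos q1 qfin.
set p := fine q.
have p0 : 0 < p by rewrite /p -lte_fin fineK.
have p1 : p <= 1 by rewrite /p -lee_fin fineK.
set r := (alpha - `|M| - 1) / p.
have rp : r * p = alpha - `|M| - 1 by rewrite /r divfK // gt_eqF.
have [z hz] := unb r.
have LX := Linf_ind P z mA.
have := H _ LX; rewrite rho_infty // => m [_ hacc].
have hle : (\int[P]_t u (z * \1_[set t | ST t = 0%R] t + m / S0 * ST t)
    <= (M + (r - M) * p)%:E)%E.
  apply: (int_le_step (a := r)) => //; first exact: mU.
    apply: aeW => t At; rewrite indicE mem_set // At mulr1 mulr0 addr0.
    exact: hz.
  exact: aeW.
have := le_trans hacc hle; rewrite lee_fin.
have hM := ler_norm M; have hM' : - `|M| <= M by rewrite lerNl -normrN ler_norm.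
nra.
Qed.

Lemma i_bwd (unb : forall r, exists z, (u z <= r%:E)%E)
  (ufin : forall x, u x \is a fin_num) (x2 : R) (hx2 : (alpha%:E < u x2)%E) :
  P [set t | ST t = 0] = 0%E ->
  forall X, Linf P X -> rho (acc_set P u alpha) S0 ST X \is a fin_num.
Proof.
move=> PA0 X LX.
have [K [K0 hK]] := Linf_bnd LX.
pose B := fun n : nat => [set t | n.+1%:R^-1 <= ST t].
have mB : forall n, measurable (B n) := fun n => meas_ge _ mST.
have hpos : {ae P, forall t, 0 < ST t}.
  have h0 : {ae P, forall t, ST t != 0}.
    by apply: (ae_of_null (meas_eq 0 mST) PA0) => t nt; apply/eqP.
  by apply: filterS2 ST0 h0 => t h1 h2; rewrite lt_neqAle eq_sym h2 h1.
have [N [mN PN hN]] := null_of_ae hpos.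
have hq : forall q, q < 1 -> exists n, (q%:E < P (B n))%E.
  move=> q q1; apply: contrapT => hn.
  have hn' : forall n, (P (B n) <= q%:E)%E.
    by move=> n; rewrite leNgt; apply/negP => h; apply: hn; exists n.
  have nd : nondecreasing_seq B.
    move=> n k nk; apply/subsetPset => t /=; apply: le_trans.
    by rewrite lef_pV2 ?posrE ?ltr0n // ler_nat ltnS.
  have cv := @nondecreasing_cvg_mu _ _ _ P _ mB (bigcupT_measurable _ mB) nd.
  have h1 : (P (\bigcup_n B n) <= q%:E)%E.
    rewrite -(cvg_lim _ cv) //; apply: lime_le; first exact: (cvgP _ cv).
    exact: nearW.
  have h2 : (1 <= P (\bigcup_n B n))%E.
    have PcN : P (~` N) = 1%E by rewrite probability_setC // PN sube0.
    rewrite -PcN; apply: le_measure; rewrite ?inE.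
    - exact: measurableC.
    - exact: bigcupT_measurable.
    move=> t nNt; have st := hN t nNt; exists (Num.truncn (ST t)^-1) => //=.
    rewrite /B /= -[X in _ <= X]invrK lef_pV2 ?posrE ?invr_gt0 ?ltr0n //.
    exact: ltW (truncnS_gt _).
  have := le_trans h2 h1; rewrite lee_fin; lra.
pose v x := fine (u x).
have uv x : u x = (v x)%:E by rewrite /v fineK.
have hM := ler_norm M; have hM' : - `|M| <= M by rewrite lerNl -normrN ler_norm.
have [n0 hn0] := hq 0 ltr01.
have := Pfin P (mB n0); have := probability_le1 P (mB n0); move: hn0.
set q0 := P (B n0) => hq0 q01 q0fin.
set p0 := fine q0.
have p00 : 0 < p0 by rewrite /p0 -lte_fin fineK.
have p01 : p0 <= 1 by rewrite /p0 -lee_fin fineK.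
set r := (alpha - `|M| - 1) / p0.
have rp : r * p0 = alpha - `|M| - 1 by rewrite /r divfK // gt_eqF.
have [z hz] := unb r.
have [zz [zz0 hzz]] : exists zz : R, 0 <= zz /\ - zz <= z.
  by exists `|z|; split => //; rewrite lerNl -normrN ler_norm.
set w0 : R := n0.+1%:R.
have w00 : 0 < w0 by rewrite ltr0n.
have w0i : w0 * w0^-1 = 1 by rewrite mulfV // gt_eqF.
have w0i0 : 0 < w0^-1 by rewrite invr_gt0.
set x3 := `|x2|.
set a' := v x3; set b' := v (- K).
have ha' : alpha < a'.
  rewrite -lte_fin -uv; apply: (lt_le_trans hx2); apply: umono; exact: ler_norm.
have hab' : b' <= a'.
  rewrite -lee_fin -!uv; apply: umono; rewrite /x3 (le_trans _ (normr_ge0 _)) //.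
  by rewrite oppr_le0.
set eta := (a' - alpha) / (a' - b' + 1).
have eta0 : 0 < eta by rewrite divr_gt0 //; lra.
have etaE : eta * (a' - b' + 1) = a' - alpha.
  by rewrite /eta divfK // lt0r_neq0 //; lra.
have [n hn] := hq (1 - eta) ltac:(lra).
have := Pfin P (mB n); have := probability_le1 P (mB n); move: hn.
set q := P (B n) => hqn qn1 qfin.
set p := fine q.
have pgt : 1 - eta < p by rewrite /p -lte_fin fineK.
set w : R := n.+1%:R.
have ww0 : 0 < w by rewrite ltr0n.
have wi : w * w^-1 = 1 by rewrite mulfV // gt_eqF.
have wi0 : 0 < w^-1 by rewrite invr_gt0.
have x30 : 0 <= x3 by exact: normr_ge0.
apply: rho_fin.
  exists ((x3 + K) * w * S0); split; first exact: Linf_lin.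
  have hm : (x3 + K) * w * S0 / S0 = (x3 + K) * w by rewrite mulfK // gt_eqF.
  have cw0 : 0 <= (x3 + K) * w by rewrite mulr_ge0 //; lra.
  apply: (le_trans _ (step_le_int (A := B n) (a := a') (b := b') (mB n) (mU _ LX) _ _)).
  - rewrite lee_fin.
    change (alpha <= b' + (a' - b') * p).
    have : 0 <= (a' - b') * (p - (1 - eta)) by rewrite mulr_ge0 //; lra.
    nra.
  - apply: filterS2 hK ST0 => t [hXl hXu] hS Bt.
    rewrite /a' -uv; apply: umono; rewrite hm.
    have : 0 <= (x3 + K) * w * (ST t - w^-1) by rewrite mulr_ge0 // subr_ge0.
    rewrite mulrBr (_ : (x3 + K) * w * w^-1 = x3 + K) ?subr_ge0.
      lra.
    by rewrite -mulrA wi mulr1.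
  - apply: filterS2 hK ST0 => t [hXl hXu] hS.
    rewrite /b' -uv; apply: umono; rewrite hm.
    have : 0 <= (x3 + K) * w * ST t by rewrite mulr_ge0.
    lra.
exists (- (K + zz) * w0 * S0) => m' [_ hacc]; rewrite leNgt; apply/negP => hlt.
have hc : m' / S0 < - (K + zz) * w0.
  have e : - (K + zz) * w0 = - (K + zz) * w0 * S0 / S0.
    by rewrite mulfK // lt0r_neq0.
  by rewrite e ltr_pM2r // invr_gt0.
have hle : (\int[P]_t u (X t + m' / S0 * ST t) <= (M + (r - M) * p0)%:E)%E.
  apply: (int_le_step (A := B n0)) => //; first exact: mU.
    apply: filterS2 hK ST0 => t [hXl hXu] hS Bt.
    apply: le_trans hz; apply: umono.
    have h1 : m' / S0 * ST t <= m' / S0 * w0^-1.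
      apply: ler_wnM2l => //.
      apply: ltW (lt_le_trans hc _).
      by rewrite mulNr oppr_le0 mulr_ge0 // ?addr_ge0 // ltW.
    have h2 : m' / S0 * w0^-1 < - (K + zz) * w0 * w0^-1 by rewrite ltr_pM2r.
    have h3 : - (K + zz) * w0 * w0^-1 = - (K + zz) by rewrite -mulrA w0i mulr1.
    rewrite h3 in h2; move: h1 h2; move: (m' / S0 * ST t) (m' / S0 / w0) => y1 y2 h1 h2; lra.
  exact: aeW.
have := le_trans hacc hle; rewrite lee_fin.
nra.
Qed.


Lemma ii_data (hii : (exists x, u x = -oo%E) \/ (forall x, (u x <= alpha%:E)%E))
  (nonconst : exists x y, u x != u y) :
  exists y b, (forall x, (u x <= b%:E)%E) /\
    (forall p, 0 < p -> p <= 1 -> exists a, (u y <= a%:E)%E /\ b + (a - b) * p < alpha).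
Proof.
have hM := ler_norm M; have hM' : - `|M| <= M by rewrite lerNl -normrN ler_norm.
case: hii => [[y uy]|hle].
  exists y, M; split => // p p0 p1.
  exists ((alpha - `|M| - 1) / p); split; first by rewrite uy leNye.
  have rp : (alpha - `|M| - 1) / p * p = alpha - `|M| - 1 by rewrite divfK // lt0r_neq0.
  nra.
have [y hy] : exists y, (u y < alpha%:E)%E.
  case: nonconst => x1 [y1 hne]; case: (ltP (u x1) alpha%:E) => h.
    by exists x1.
  have e : u x1 = alpha%:E by apply/eqP; rewrite eq_le hle h.
  exists y1; rewrite lt_neqAle hle andbT -e eq_sym //.
exists y, alpha; split => // p p0 p1.
case Ey: (u y) hy => [ry| |] hy.
- exists ry; split; first by rewrite lexx.
  rewrite lte_fin in hy; nra.
- by [].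
- exists (alpha - 1); split; first by rewrite leNye.
  nra.
Qed.

Lemma ii_fwd (y b : R) (ub : forall x, (u x <= b%:E)%E)
  (hab : forall p, 0 < p -> p <= 1 -> exists a, (u y <= a%:E)%E /\ b + (a - b) * p < alpha) :
  (forall X, Linf P X -> rho (acc_set P u alpha) S0 ST X \is a fin_num) ->
  exists eps : R, 0 < eps /\ P [set t | eps <= ST t] = 1%E.
Proof.
move=> H; apply: contrapT => heps.
have LX := Linf_cst P (y - 1).
have := H _ LX; rewrite rho_infty // => m [_ hacc].
have [mm [mm0 [hmm1 hmm2]]] : exists mm : R, 0 <= mm /\ (- mm <= m /\ m <= mm).
  exists `|m|; split => //; split; last exact: ler_norm.
  by rewrite lerNl -normrN ler_norm.
set eps := S0 / (mm + 1).
have eps0 : 0 < eps by rewrite divr_gt0 //; lra.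
have mE : measurable [set t | eps <= ST t] := meas_ge eps mST.
have hE : P [set t | eps <= ST t] != 1%E.
  by apply/eqP => h; apply: heps; exists eps.
have mA := measurableC mE.
have PA := probability_setC P mE.
have := Pfin P mA; have := probability_le1 P mA.
have := Pfin P mE; have := probability_le1 P mE; move: hE PA.
set qE := P [set t | eps <= ST t]; set qA := P (~` _).
move=> hE PA qE1 qEfin qA1 qAfin.
set p := fine qA.
have p0 : 0 < p.
  rewrite /p -lte_fin fineK // PA sube_gt0 lt_neqAle hE qE1 //.
have p1 : p <= 1 by rewrite /p -lee_fin fineK.
have [a [ha hlt]] := hab p p0 p1.
have hle : (\int[P]_t u (y - 1 + m / S0 * ST t) <= (b + (a - b) * p)%:E)%E.
  apply: (int_le_step (A := ~` [set t | eps <= ST t])) => //; first exact: mU.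
    apply: filterS ST0 => t hS At.
    apply: le_trans ha; apply: umono.
    have At' : ST t < eps by rewrite ltNge; apply/negP.
    have h1 : m / S0 * ST t <= mm / S0 * ST t.
      by apply: ler_wpM2r => //; apply: ler_wpM2r => //; rewrite invr_ge0 ltW.
    have h2 : mm / S0 * ST t <= mm / S0 * eps.
      by apply: ler_wpM2l; [rewrite divr_ge0 // ltW | exact: ltW].
    have h3 : mm / S0 * eps = mm / (mm + 1).
      have n1 : mm + 1 != 0 by apply: lt0r_neq0; lra.
      by rewrite /eps; field; rewrite n1 lt0r_neq0.
    have h4 : mm / (mm + 1) < 1 by rewrite ltr_pdivrMr; lra.
    rewrite h3 in h2.
    move: h1 h2 h4; move: (m / S0 * ST t) (mm / S0 * ST t) (mm / (mm + 1)) => z1 z2 z3.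
    lra.
  exact: aeW.
have := le_trans hacc hle; rewrite lee_fin; lra.
Qed.

Lemma ii_bwd (y b : R) (ub : forall x, (u x <= b%:E)%E)
  (hab : forall p, 0 < p -> p <= 1 -> exists a, (u y <= a%:E)%E /\ b + (a - b) * p < alpha)
  (uNpy : forall x, u x != +oo%E) (x0 : R) (hx0 : (alpha%:E <= u x0)%E) :
  (exists eps : R, 0 < eps /\ P [set t | eps <= ST t] = 1%E) ->
  forall X, Linf P X -> rho (acc_set P u alpha) S0 ST X \is a fin_num.
Proof.
move=> [eps [eps0 hE]] X LX.
have [K [K0 hK]] := Linf_bnd LX.
have mE : measurable [set t | eps <= ST t] := meas_ge eps mST.
have hge : {ae P, forall t, eps <= ST t}.
  apply: (ae_of_null (measurableC mE)).
    by rewrite probability_setC // hE -EFinB subrr.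
  by move=> t nt; apply: contrapT => h; exact: nt h.
have x0fin : u x0 \is a fin_num.
  rewrite fin_numE uNpy andbT; apply/eqP => h; move: hx0; rewrite h.
  by rewrite leeNy_eq.
set v0 := fine (u x0).
have hv0 : alpha <= v0 by rewrite -lee_fin /v0 fineK.
have [xx [xx0 hxx]] : exists xx : R, 0 <= xx /\ x0 <= xx.
  by exists `|x0|; split => //; exact: ler_norm.
have [yy [yy0 hyy]] : exists yy : R, 0 <= yy /\ - yy <= y.
  by exists `|y|; split => //; rewrite lerNl -normrN ler_norm.
apply: rho_fin.
  exists ((K + xx) / eps * S0); split; first exact: Linf_lin.
  have hm : (K + xx) / eps * S0 / S0 = (K + xx) / eps by rewrite mulfK // lt0r_neq0.
  have c0 : 0 <= (K + xx) / eps by rewrite divr_ge0 // ?addr_ge0 // ltW.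
  have ce : (K + xx) / eps * eps = K + xx by rewrite divfK // lt0r_neq0.
  have hY : {ae P, forall t, x0 <= X t + (K + xx) / eps * S0 / S0 * ST t}.
    apply: filterS2 hK hge => t [hXl hXu] hS; rewrite hm.
    have h1 : (K + xx) / eps * eps <= (K + xx) / eps * ST t by exact: ler_wpM2l.
    rewrite ce in h1; move: h1; move: ((K + xx) / eps * ST t) => z1 h1; lra.
  apply: (le_trans _ (step_le_int (A := setT) (a := v0) (b := v0) measurableT (mU _ LX) _ _)).
  - by rewrite subrr mul0r addr0 lee_fin.
  - apply: filterS hY => t h _; rewrite /v0 fineK //; exact: umono.
  - apply: filterS hY => t h; rewrite /v0 fineK //; exact: umono.
exists (- (K + yy) / eps * S0) => m' [_ hacc]; rewrite leNgt; apply/negP => hlt.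
have hc : m' / S0 < - (K + yy) / eps.
  have e : - (K + yy) / eps = - (K + yy) / eps * S0 / S0 by rewrite mulfK // lt0r_neq0.
  by rewrite e ltr_pM2r // invr_gt0.
have [a [ha hlt']] := hab 1 ltr01 (lexx 1).
have hle : (\int[P]_t u (X t + m' / S0 * ST t) <= (b + (a - b) * fine (P [set: T]))%:E)%E.
  apply: (int_le_step (A := setT)) => //; first exact: mU.
    apply: filterS2 hK hge => t [hXl hXu] hS _.
    apply: le_trans ha; apply: umono.
    have cn : m' / S0 <= 0.
      apply: ltW (lt_le_trans hc _).
      by rewrite mulNr oppr_le0 divr_ge0 // ?addr_ge0 // ltW.
    have h1 : m' / S0 * ST t <= m' / S0 * eps by exact: ler_wnM2l.
    have h2 : m' / S0 * eps < - (K + yy) / eps * eps by rewrite ltr_pM2r.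
    have h3 : - (K + yy) / eps * eps = - (K + yy) by rewrite divfK // lt0r_neq0.
    rewrite h3 in h2; move: h1 h2; move: (m' / S0 * ST t) (m' / S0 * eps) => z1 z2.
    lra.
  exact: aeW.
have := le_trans hacc hle; rewrite fineT mulr1 lee_fin; lra.
Qed.
End Main.

Theorem proposition6p1 (R : realType) (d : measure_display) (T : measurableType d)
  (P : probability T R) (u : R -> \bar R) (alpha : R) (S0 : R) (ST : T -> R) :
  nonatomic P -> utility u ->
  (exists M : R, forall x, (u x <= M%:E)%E) ->
  (exists x, (alpha%:E <= u x)%E) ->
  traded_asset P S0 ST -> Linf P ST ->
  ((forall x, u x != -oo%E) -> (exists x, (alpha%:E < u x)%E) ->
     ((forall X, Linf P X -> rho (acc_set P u alpha) S0 ST X \is a fin_num)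
      <-> P [set t | ST t = 0] = 0%E))
  /\
  (((exists x, u x = -oo%E) \/ (forall x, (u x <= alpha%:E)%E)) ->
     ((forall X, Linf P X -> rho (acc_set P u alpha) S0 ST X \is a fin_num)
      <-> exists eps : R, 0 < eps /\ P [set t | eps <= ST t] = 1%E)).
Proof.
move=> _ [uNpy nonconst umono uconc] [M uM] [x0 hx0] [S0pos mST ST0 _] LST.
split.
- move=> uNy [x2 hx2].
  have ufin x : u x \is a fin_num by rewrite fin_numE uNy uNpy.
  pose v x := fine (u x).
  have uv x : u x = (v x)%:E by rewrite /v fineK.
  have unb : forall r, exists z, (u z <= r%:E)%E.
    move=> r; have [|||z hz] := @conc_unb R v _ _ _ r.
    - by move=> x y xy; rewrite -lee_fin -!uv; exact: umono.
    - case: nonconst => a [b h]; exists a, b; apply: contra h.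
      by rewrite !uv => /eqP ->.
    - move=> x y l l0 l1; rewrite -lee_fin -uv EFinD !EFinM -!uv; exact: uconc.
    by exists z; rewrite uv lee_fin.
  split.
  + exact: (i_fwd umono uM mST LST unb).
  + exact: (i_bwd umono uM S0pos mST ST0 LST unb ufin hx2).
- move=> hii.
  have [y [b [ub hab]]] := ii_data uM hii nonconst.
  split.
  + exact: (ii_fwd umono S0pos mST ST0 LST ub hab).
  + exact: (ii_bwd umono S0pos mST LST ub hab uNpy hx0).
Qed.
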